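(* The certifier's revenue-maximization problem in the certification market is equivalent to an instance of the non-linear pricing problem with buyer types $\psi$ distributed according to $G$ and valuation $v(q;\psi)=f(q;\phi(\psi))-g(q;\psi)$, where $\phi(\psi)$ satisfies $F(\phi(\psi))=G(\psi)$. Specifically: $v$ is concave in $q$, satisfies $v(0;\psi)=0$, and satisfies the strict single-crossing condition; and for every menu $M=\{(q_i,t_i)\}$, the certificate chosen by each producer type $\psi$ in equilibrium coincides with the quantity chosen by buyer type $\psi$ facing the menu $M$ (interpreting thresholds as quantities and transfers as prices), so the certifier's revenue (net of verification cost $c$ per non-trivial certificate) from $M$ equals the seller's revenue from $M$ in the pricing problem.
   Context: Certification market: producers with types $\psi$ (atomless distribution $G$, compact support), consumers with types $\phi$ (atomless distribution $F$, compact support), quality $q\in[0,1]$; cost $g(q;\psi)$ weakly convex non-decreasing in $q$, $g(0;\psi)=0$; value $f(q;\phi)$ weakly concave non-decreasing in $q$, $f(0;\phi)=0$, $0\le f\le 1$; strict single-crossing: for $\phi_1<\phi_2$, $q_1<q_2$: $f(q_2;\phi_2)-f(q_1;\phi_2)>f(q_2;\phi_1)-f(q_1;\phi_1)$, and for $\psi_1<\psi_2$, $q_1<q_2$: $g(q_2;\psi_2)-g(q_1;\psi_2)<g(q_2;\psi_1)-g(q_1;\psi_1)$. The certifier offers a menu $M=\{(q_i,t_i)\}$ of threshold certificates $[q_i,1]$ with transfers $t_i$ (always including $(0,0)$), incurs verification cost $c\ge0$ for each non-trivial certificate ($q_i>0$) issued, and each producer choosing threshold $q_i$ produces at quality $q_i$;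 producers choose certificates in equilibrium and then trade with consumers in a competitive (Walrasian) market equilibrium. Certifier revenue = expected transfers minus $c$ times the measure of producers buying non-trivial certificates. Non-linear pricing problem: a seller faces a buyer of type $\theta$ drawn from a known prior; the buyer's value for quantity $q\in[0,1]$ is $v(q;\theta)$, concave (not necessarily monotone) in $q$ with $v(0;\theta)=0$, satisfying strict single-crossing: for $\theta_1<\theta_2$, $q_1<q_2$, $v(q_2;\theta_2)-v(q_1;\theta_2)>v(q_2;\theta_1)-v(q_1;\theta_1)$. The seller commits to a menu $M$ of (quantity, price) pairs including $(0,0)$; the buyer selects a pair maximizing $v(q;\theta)-p$; the seller pays a constant cost $c$ for any non-zero quantity sold. $\operatorname{Rev}(M)$ denotes the expected price collected minus $c$ times the probability of selling a non-zero quantity. *)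

(* Defs.v *)
From HB Require Import structures.
From mathcomp Require Import all_boot all_order all_algebra.
From mathcomp Require Import all_classical all_reals all_analysis.
Set Implicit Arguments. Unset Strict Implicit. Unset Printing Implicit Defensive.
Import Order.TTheory GRing.Theory Num.Theory.
Import numFieldNormedType.Exports.
Local Open Scope classical_set_scope.
Local Open Scope ring_scope.

Section Defs.
Variable R : realType.

Definition cdfR (P : probability R R) (x : R) : R := fine (P [set` `]-oo, x]]).

Definition atomless (P : probability R R) : Prop := forall x : R, P [set x] = 0%E.

Definition compact_support (P : probability R R) : Prop :=
  exists a b : R, P [set` `[a, b]] = 1%E.

Definition in01 (q : R) : bool := (0 <= q) && (q <= 1).

Definition concave01 (h : R -> R) : Prop :=
  forall x y l, in01 x -> in01 y -> 0 <= l <= 1 ->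
    l * h x + (1 - l) * h y <= h (l * x + (1 - l) * y).

Definition convex01 (h : R -> R) : Prop :=
  forall x y l, in01 x -> in01 y -> 0 <= l <= 1 ->
    h (l * x + (1 - l) * y) <= l * h x + (1 - l) * h y.

Definition nondecreasing01 (h : R -> R) : Prop :=
  forall x y, in01 x -> in01 y -> x <= y -> h x <= h y.

Definition strict_single_crossing (h : R -> R -> R) : Prop :=
  forall th1 th2 q1 q2, th1 < th2 -> in01 q1 -> in01 q2 -> q1 < q2 ->
    h q2 th2 - h q1 th2 > h q2 th1 - h q1 th1.

Definition strict_cost_single_crossing (h : R -> R -> R) : Prop :=
  forall th1 th2 q1 q2, th1 < th2 -> in01 q1 -> in01 q2 -> q1 < q2 ->
    h q2 th2 - h q1 th2 < h q2 th1 - h q1 th1.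

(* a menu: finite list of (threshold/quantity, transfer/price) pairs,
   containing (0,0), with thresholds in [0,1] *)
Definition menu (M : seq (R * R)) : Prop :=
  (0, 0) \in M /\ all (fun m => in01 m.1) M.

(** ---- Certification market: producers choose certificates, then
    Walrasian trade. [s psi] is the certificate (q,t) bought by producer psi
    (who then produces at quality q); [k phi] is the quality bought by
    consumer phi ([None] = buys nothing); [p q] is the market price of
    goods carrying the certificate with threshold q. ---- *)

Definition consumer_utility (f : R -> R -> R) (p : R -> R) (ph : R)
    (o : option R) : R :=
  match o with None => 0 | Some q => f q ph - p q end.

Definition cert_equilibrium (PG PF : probability R R) (f g : R -> R -> R)
    (M : seq (R * R)) (s : R -> R * R) (k : R -> option R) (p : R -> R) :
    Prop :=
  [/\
      (forall ps, s ps \in M),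
      (forall ps m, m \in M ->
          p m.1 - m.2 - g m.1 ps <= p (s ps).1 - (s ps).2 - g (s ps).1 ps),
      (forall ph q, k ph = Some q -> q \in map fst M) /\
      (forall ph, 0 <= consumer_utility f p ph (k ph) /\
         forall q, q \in map fst M ->
           f q ph - p q <= consumer_utility f p ph (k ph)),
      ((forall m, measurable [set ps | s ps = m]) /\
       (forall q, measurable [set ph | k ph = Some q])) &
      (forall q, q \in map fst M ->
         PG [set ps | (s ps).1 = q] = PF [set ph | k ph = Some q])].

Definition certifier_revenue (PG : probability R R) (c : R)
    (s : R -> R * R) : \bar R :=
  ((\int[PG]_ps ((s ps).2)%:E) - (c%:E * PG [set ps | (0 < (s ps).1)%R]))%E.

Definition buyer_choice (v : R -> R -> R) (M : seq (R * R))
    (b : R -> R * R) : Prop :=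
  forall th, b th \in M /\
    forall m, m \in M -> v m.1 th - m.2 <= v (b th).1 th - (b th).2.

Definition seller_revenue (P : probability R R) (c : R)
    (b : R -> R * R) : \bar R :=
  ((\int[P]_th ((b th).2)%:E) - (c%:E * P [set th | ((b th).1 != 0)%R]))%E.

End Defs.

(* Main.v *)
Require Import Defs.
From HB Require Import structures.
From mathcomp Require Import all_boot all_order all_algebra.
From mathcomp Require Import all_classical all_reals all_analysis.
From mathcomp Require Import lra measurable_realfun.
Import Order.TTheory GRing.Theory Num.Theory.
Import numFieldNormedType.Exports.
Local Open Scope classical_set_scope.
Local Open Scope ring_scope.
Lemma cofinal_seq (R : realType) (S : set R) : S !=set0 ->
  exists x : nat -> R, (forall n, S (x n)) /\ (forall y, S y -> exists n, y <= x n).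
Proof.
move=> S0.
have [[m [Sm mub]]|nomax] := pselect (exists m, S m /\ ubound S m).
  by exists (fun=> m); split => // y Sy; exists 0%N; exact: mub.
have [ub|nub] := pselect (has_ubound S).
  have hs : has_sup S by [].
  have : forall n : nat, exists y, S y /\ sup S - n.+1%:R^-1 < y.
    move=> n; have hn : 0 < n.+1%:R^-1 :> R by rewrite invr_gt0.
    have [e Se He] := sup_adherent hn hs.
    by exists e.
  move=> /choice[x Hx]; exists x; split; first by move=> n; case: (Hx n).
  move=> y Sy.
  have ys : y < sup S.
    rewrite lt_neqAle sup_upper_bound // andbT; apply/negP => /eqP ey.
    by apply: nomax; exists y; split => //; rewrite ey; exact: sup_upper_bound.
  have [k Hk] := ltr_add_invr ys.
  exists k; case: (Hx k) => _ H2. move: Hk H2. set a := (k.+1%:R^-1). set b := sup S. move=> Hk H2. lra.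
have : forall n : nat, exists y, S y /\ n%:R < y.
  move=> n; apply: contrapT => H; apply: nub; exists n%:R => y Sy.
  by rewrite leNgt; apply/negP => Hy; apply: H; exists y.
move=> /choice[x Hx]; exists x; split; first by move=> n; case: (Hx n).
move=> y Sy; have [y0|y0] := lerP y 0.
  by exists 0%N; case: (Hx 0%N) => _; lra.
exists (Num.bound y); case: (Hx (Num.bound y)) => _ H.
have := archi_boundP (ltW y0); lra.
Qed.
Arguments cofinal_seq {R S}.
Section MR.
Variable R : realType.
Variable P : probability R R.
Definition mr (A : set R) : R := fine (P A).
Lemma mrE A : measurable A -> P A = (mr A)%:E.
Proof. by move=> mA; rewrite /mr fineK // fin_num_measure. Qed.
Lemma mrU A B : measurable A -> measurable B -> A `&` B = set0 ->
  mr (A `|` B) = mr A + mr B.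
Proof.
move=> mA mB AB; rewrite /mr measureU // fineD // fin_num_measure //.
Qed.
Lemma mr_le A B : measurable A -> measurable B -> A `<=` B -> mr A <= mr B.
Proof.
move=> mA mB AB; rewrite -lee_fin -!mrE //; apply: le_measure => //; by rewrite inE.
Qed.
Lemma mr_ge0 A : measurable A -> 0 <= mr A.
Proof. by move=> mA; rewrite -lee_fin -mrE. Qed.
Lemma mrT : mr setT = 1.
Proof. rewrite /mr. rewrite probability_setT. done. Qed.
Lemma mr0 A : measurable A -> (P A = 0%E <-> mr A = 0).
Proof. by move=> mA; rewrite mrE //; split => [[]|->]. Qed.
Lemma mrU2 A B : measurable A -> measurable B -> mr (A `|` B) <= mr A + mr B.
Proof.
move=> mA mB; rewrite -lee_fin EFinD -!mrE //; last exact: measurableU.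
exact: measureU2.
Qed.
End MR.
Arguments mrE {R} P {A}.
Arguments mrU {R} P {A B}.
Arguments mr_le {R} P {A B}.
Arguments mr_ge0 {R} P {A}.
Arguments mrT {R} P.
Arguments mr0 {R} P {A}.
Arguments mrU2 {R} P {A B}.
Arguments mr {R} P A.
Lemma null_diff (R : realType) (P : probability R R) (A N : set R) :
  measurable A -> measurable N -> P N = 0%E -> P A = P (A `\` N).
Proof.
move=> mA mN N0.
have mAD : measurable (A `\` N) by apply: measurableD.
have mAI : measurable (A `&` N) by apply: measurableI.
have d : (A `\` N) `&` (A `&` N) = set0.
  by apply/seteqP; split => x // -[[_ nN] [_ xN]].
have e : (A `\` N) `|` (A `&` N) = A.
  apply/seteqP; split => x; first by case=> -[].
  by move=> Ax; case: (pselect (N x)) => Nx; [right|left].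
have h := mrU P mAD mAI d; rewrite e in h.
have h0 : mr P N = 0 by apply/(mr0 P mN).
have := mr_le P mAI mN (@subIsetr _ A N).
have := mr_ge0 P mAI.
move=> g1 g2.
rewrite (mrE P mA) (mrE P mAD); congr (_%:E); lra.
Qed.
Section Gen.
Variable R : realType.

Lemma meas_const (P : Prop) : measurable [set _ : R | P].
Proof.
case: (pselect P) => HP.
  by have -> : [set _ : R | P] = setT by apply/seteqP; split.
by have -> : [set _ : R | P] = set0 by apply/seteqP; split.
Qed.

Lemma meas_fin (T : eqType) (h : R -> T) (L : seq T) (Q : T -> set R) :
  (forall m, m \in L -> measurable [set x | h x = m]) ->
  (forall m, m \in L -> measurable (Q m)) ->
  measurable [set x | h x \in L /\ Q (h x) x].
Proof.
elim: L => [|a L IH] mh mQ.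
  by have -> : [set x | h x \in [::] /\ Q (h x) x] = set0
    by apply/seteqP; split => x //= [].
have -> : [set x | h x \in a :: L /\ Q (h x) x] =
   ([set x | h x = a] `&` Q a) `|` [set x | h x \in L /\ Q (h x) x].
  apply/seteqP; split => x /=.
    rewrite in_cons => -[/orP[/eqP ->|xL] Qx]; [by left|by right].
  by case => [[-> Qx]|[xL Qx]]; rewrite in_cons ?eqxx ?xL ?orbT.
apply: measurableU.
  by apply: measurableI; [apply: mh|apply: mQ]; rewrite in_cons eqxx.
by apply: IH => m mL; [apply: mh|apply: mQ]; rewrite in_cons mL orbT.
Qed.

Lemma meas_union (T : eqType) (L : seq T) (B : T -> set R) :
  (forall q, q \in L -> measurable (B q)) ->
  measurable [set x | exists q, q \in L /\ B q x].
Proof.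
elim: L => [|a L IH] mB.
  by have -> : [set x | exists q, q \in [::] /\ B q x] = set0
    by apply/seteqP; split => x //= [q []].
have -> : [set x | exists q, q \in a :: L /\ B q x] =
   B a `|` [set x | exists q, q \in L /\ B q x].
  apply/seteqP; split => x /=.
    by move=> [q []]; rewrite in_cons => /orP[/eqP ->|qL Bx]; [left|right; exists q].
  by case => [Bx|[q [qL Bx]]]; [exists a; rewrite in_cons eqxx|exists q; rewrite in_cons qL orbT].
apply: measurableU; first by apply: mB; rewrite in_cons eqxx.
by apply: IH => q qL; apply: mB; rewrite in_cons qL orbT.
Qed.

Lemma meas_fin_fun (T : eqType) (h : R -> T) (L : seq T) (F : T -> \bar R) :
  (forall m, measurable [set x | h x = m]) -> (forall x, h x \in L) ->
  measurable_fun setT (F \o h).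
Proof.
move=> mh hL _ Y mY; rewrite setTI.
have -> : (F \o h) @^-1` Y = [set x | h x \in L /\ [set _ : R | Y (F (h x))] x].
  by apply/seteqP; split => x /=; [move=> Yx; split|case].
exact: (@meas_fin _ h L (fun m => [set _ : R | Y (F m)]) (fun m _ => mh m) (fun m _ => meas_const _)).
Qed.

Lemma argmax (T : eqType) (w : T -> R) (L : seq T) : L != [::] ->
  exists2 m, m \in L & forall m', m' \in L -> w m' <= w m.
Proof.
elim: L => [//|a L IH] _.
case: L IH => [|b L] IH.
  by exists a; rewrite ?mem_head // => m'; rewrite inE => /eqP ->.
have [m mL Hm] := IH isT.
have [le|lt] := lerP (w a) (w m).
  exists m; first by rewrite in_cons mL orbT.
  by move=> m'; rewrite in_cons => /orP[/eqP ->//|]; exact: Hm.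
exists a; first exact: mem_head.
move=> m'; rewrite in_cons => /orP[/eqP ->//|/Hm H]; exact: (le_trans H (ltW lt)).
Qed.

Lemma negl_fin (P : probability R R) (T : eqType) (L : seq T) (B : T -> set R) :
  (forall q, P.-negligible (B q)) -> P.-negligible [set x | exists q, q \in L /\ B q x].
Proof.
move=> nB; elim: L => [|a L IH].
  by apply: (negligibleS _ (negligible_set0 P)) => x [q []].
apply: (negligibleS _ (negligibleU (nB a) IH)) => x [q []].
by rewrite in_cons => /orP[/eqP ->|qL Bx]; [left|right; exists q].
Qed.

Definition Iv (x : R) := [set y : R | y <= x].
Definition Jv (x : R) := [set y : R | x < y].
Lemma Ieq x : [set` `]-oo, x]] = Iv x.
Proof. by apply/seteqP; split => y /=; rewrite in_itv. Qed.
Lemma mIv x : measurable (Iv x).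
Proof. rewrite -Ieq; exact: measurable_itv. Qed.
Lemma JvC x : Jv x = ~` Iv x.
Proof. by apply/seteqP; split => y /=; rewrite /Iv /Jv /= ltNge => /negP. Qed.
Lemma mJv x : measurable (Jv x).
Proof. rewrite JvC; apply: measurableC; exact: mIv. Qed.
End Gen.
Arguments Iv {R}. Arguments Jv {R}. Arguments Ieq {R}. Arguments mIv {R}.
Arguments JvC {R}. Arguments mJv {R}.
Arguments argmax {R T} w {L}.
Section Main.
Variable R : realType.
Variables (PG PF : probability R R) (f g : R -> R -> R) (phi : R -> R).
Hypothesis atG : atomless PG.
Hypothesis f0 : forall ph, f 0 ph = 0.
Hypothesis g0 : forall ps, g 0 ps = 0.
Hypothesis scf : strict_single_crossing f.
Hypothesis scg : strict_cost_single_crossing g.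
Hypothesis phimono : {homo phi : x y / x <= y}.
Hypothesis cdfeq : forall ps, cdfR PF (phi ps) = cdfR PG ps.
Variables (M : seq (R * R)) (s : R -> R * R) (k : R -> option R) (p : R -> R).
Hypothesis HM : menu M.
Hypothesis HE : cert_equilibrium PG PF f g M s k p.

Let v q ps := f q (phi ps) - g q ps.

Let sM : forall ps, s ps \in M. Proof. by case: HE. Qed.
Let popt : forall ps m, m \in M ->
  p m.1 - m.2 - g m.1 ps <= p (s ps).1 - (s ps).2 - g (s ps).1 ps.
Proof. by case: HE. Qed.
Let kin : forall ph q, k ph = Some q -> q \in map fst M.
Proof. by case: HE => _ _ []. Qed.
Let copt : forall ph, 0 <= consumer_utility f p ph (k ph) /\
  forall q, q \in map fst M -> f q ph - p q <= consumer_utility f p ph (k ph).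
Proof. by case: HE => _ _ []. Qed.
Let ms : forall m, measurable [set ps | s ps = m].
Proof. by case: HE => _ _ _ []. Qed.
Let mk : forall q, measurable [set ph | k ph = Some q].
Proof. by case: HE => _ _ _ []. Qed.
Let clr : forall q, q \in map fst M ->
  PG [set ps | (s ps).1 = q] = PF [set ph | k ph = Some q].
Proof. by case: HE. Qed.

Lemma in01M {m} : m \in M -> in01 m.1.
Proof. by case: HM => _ /allP; apply. Qed.
Lemma in01Q {q} : q \in map fst M -> in01 q.
Proof. by move=> /mapP[m mM ->]; exact: in01M. Qed.

Lemma mono_s ps1 ps2 : ps1 < ps2 -> (s ps1).1 <= (s ps2).1.
Proof.
move=> lt; rewrite leNgt; apply/negP => H.
have := popt ps1 (s ps2) (sM ps2); have := popt ps2 (s ps1) (sM ps1).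
have := scg _ _ _ _ lt (in01M (sM ps2)) (in01M (sM ps1)) H.
lra.
Qed.

Lemma mono_k ph1 ph2 qa qb : ph1 < ph2 -> k ph1 = Some qa -> k ph2 = Some qb ->
  qa <= qb.
Proof.
move=> lt ka kb; rewrite leNgt; apply/negP => H.
have [_ c1] := copt ph1; have := c1 qb (kin _ _ kb); rewrite /consumer_utility ka.
have [_ c2] := copt ph2; have := c2 qa (kin _ _ ka); rewrite /consumer_utility kb.
have := scf _ _ _ _ lt (in01Q (kin _ _ kb)) (in01Q (kin _ _ ka)) H.
lra.
Qed.

Lemma key ps ph1 ph2 qa qb : ph1 <= phi ps -> k ph1 = Some qa -> (s ps).1 <= qa ->
  phi ps < ph2 -> k ph2 = Some qb -> qb <= (s ps).1 ->
  forall m, m \in M -> v m.1 ps - m.2 <= v (s ps).1 ps - (s ps).2.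
Proof.
move=> l1 ka ha l2 kb hb m mM.
have qab : qa <= qb := mono_k _ _ _ _ (le_lt_trans l1 l2) ka kb.
have eqa : qa = (s ps).1 by apply/eqP; rewrite eq_le (le_trans qab hb) ha.
have eqb : qb = (s ps).1 by apply/eqP; rewrite eq_le hb (le_trans ha qab).
have q'M : m.1 \in map fst M by exact: map_f.
have qM : (s ps).1 \in map fst M by exact: map_f.
have Hf : f m.1 (phi ps) - f (s ps).1 (phi ps) <= p m.1 - p (s ps).1.
  have [lt|gt|eq] := ltgtP (s ps).1 m.1.
  - have [_ c2] := copt ph2; have := c2 _ q'M; rewrite /consumer_utility kb eqb.
    have := scf _ _ _ _ l2 (in01Q qM) (in01Q q'M) lt. lra.
  - have [_ c1] := copt ph1; have := c1 _ q'M; rewrite /consumer_utility ka eqa.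
    move: l1; rewrite le_eqVlt => /orP[/eqP ->|l1]; first lra.
    have := scf _ _ _ _ l1 (in01Q q'M) (in01Q qM) gt. lra.
  - rewrite eq; lra.
have := popt ps m mM; rewrite /v; lra.
Qed.

Definition AG (P : pred R) := [set ps | P (s ps).1].
Definition CF (P : pred R) := [set ph | if k ph is Some q then P q else false].
Let Qs := undup (map fst M).

Lemma mAG P : measurable (AG P).
Proof.
have -> : AG P = [set x | s x \in M /\ [set _ : R | P (s x).1] x].
  by apply/seteqP; split => x /=; [move=> ?; split|case].
exact: (@meas_fin _ _ s M (fun m => [set _ : R | P m.1]) (fun m _ => ms m) (fun m _ => meas_const _ _)).
Qed.

Lemma mCF P : measurable (CF P).
Proof.
have -> : CF P = [set x | exists q, q \in map fst M /\
    ([set ph | k ph = Some q] `&` [set _ : R | P q]) x].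
  apply/seteqP; split => x /=.
    rewrite /CF /=; case kx: (k x) => [q|//] Pq; exists q; split => //.
    exact: (kin _ _ kx).
  by move=> [q [_ [kx Pq]]]; rewrite /CF /= kx.
apply: meas_union => q _; apply: measurableI; [exact: mk|exact: meas_const].
Qed.
Lemma clear1 a (P : pred R) : a \in map fst M ->
  mr PG (AG (fun q => (q == a) && P q)) = mr PF (CF (fun q => (q == a) && P q)).
Proof.
move=> aM; case Pa: (P a).
- have -> : AG (fun q => (q == a) && P q) = [set ps | (s ps).1 = a].
    apply/seteqP; split => x; rewrite /AG /=.
      by move=> /andP[/eqP].
    by move=> ->; rewrite eqxx Pa.
  have -> : CF (fun q => (q == a) && P q) = [set ph | k ph = Some a].
    apply/seteqP; split => x; rewrite /CF /=.
      by case: (k x) => // q /andP[/eqP ->].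
    by move=> ->; rewrite eqxx Pa.
  by rewrite /mr clr.
- have -> : AG (fun q => (q == a) && P q) = set0.
    apply/seteqP; split => x //; rewrite /AG /= => /andP[/eqP e].
    by rewrite e Pa.
  have -> : CF (fun q => (q == a) && P q) = set0.
    apply/seteqP; split => x //; rewrite /CF /=.
    by case: (k x) => // q /andP[/eqP ->]; rewrite Pa.
  by rewrite /mr !measure0.
Qed.

Lemma clearl (l : seq R) (P : pred R) : uniq l -> {subset l <= map fst M} ->
  mr PG (AG (fun q => (q \in l) && P q)) = mr PF (CF (fun q => (q \in l) && P q)).
Proof.
elim: l => [|a l IH] /=.
  move=> _ _.
  have -> : AG (fun q => (q \in [::]) && P q) = set0.
    by apply/seteqP; split => x.
  have -> : CF (fun q => (q \in [::]) && P q) = set0.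
    by apply/seteqP; split => x //; rewrite /CF /=; case: (k x).
  by rewrite /mr !measure0.
move=> /andP[al ul] sub.
have aM : a \in map fst M by apply: sub; rewrite in_cons eqxx.
have sub' : {subset l <= map fst M} by move=> q ql; apply: sub; rewrite in_cons ql orbT.
have eA : AG (fun q => (q \in a :: l) && P q) =
    AG (fun q => (q == a) && P q) `|` AG (fun q => (q \in l) && P q).
  apply/seteqP; split => x; rewrite /AG /= in_cons.
    by move=> /andP[/orP[H|H] Py]; [left|right]; rewrite H Py.
  by case=> /andP[H Py]; rewrite H ?orbT Py.
have eC : CF (fun q => (q \in a :: l) && P q) =
    CF (fun q => (q == a) && P q) `|` CF (fun q => (q \in l) && P q).
  apply/seteqP; split => x; rewrite /CF /=; case: (k x) => [q|]; rewrite ?in_cons //=.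
    by move=> /andP[/orP[H|H] Py]; [left|right]; rewrite H Py.
  by case=> /andP[H Py]; rewrite H ?orbT Py.
  by case.
have dA : AG (fun q => (q == a) && P q) `&` AG (fun q => (q \in l) && P q) = set0.
  apply/seteqP; split => x //; rewrite /AG /= => -[/andP[/eqP e _] /andP[H _]].
  by move: H; rewrite e (negbTE al).
have dC : CF (fun q => (q == a) && P q) `&` CF (fun q => (q \in l) && P q) = set0.
  apply/seteqP; split => x //; rewrite /CF /=; case: (k x) => [q|[]//].
  move=> -[/andP[/eqP e _] /andP[H _]].
  by move: H; rewrite e (negbTE al).
rewrite eA eC (mrU PG (mAG _) (mAG _) dA) (mrU PF (mCF _) (mCF _) dC).
by rewrite clear1 // IH.
Qed.

Lemma clear (P : pred R) : mr PG (AG P) = mr PF (CF P).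
Proof.
have -> : AG P = AG (fun q => (q \in Qs) && P q).
  apply/seteqP; split => x; rewrite /AG /= mem_undup.
    by move=> ->; rewrite map_f ?sM.
  by case/andP.
have -> : CF P = CF (fun q => (q \in Qs) && P q).
  apply/seteqP; split => x; rewrite /CF /=; case kx: (k x) => [q|//].
    by rewrite mem_undup (kin _ _ kx).
  by case/andP.
apply: clearl; first exact: undup_uniq.
by move=> q; rewrite mem_undup.
Qed.

Lemma mNone : measurable [set ph | k ph = None].
Proof.
have -> : [set ph | k ph = None] = ~` CF predT.
  by apply/seteqP; split => x; rewrite /CF /=; case: (k x) => [q|] //=.
apply: measurableC; exact: mCF.
Qed.

Lemma mrNone : mr PF [set ph | k ph = None] = 0.
Proof.
have d : [set ph | k ph = None] `&` CF predT = set0.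
  by apply/seteqP; split => x //; rewrite /CF /= => -[->].
have e : [set ph | k ph = None] `|` CF predT = setT.
  apply/seteqP; split => x //= _; rewrite /CF /=; case: (k x) => [q|]; by [right|left].
have := mrU PF mNone (mCF _) d; rewrite e mrT -clear.
have -> : AG predT = setT by apply/seteqP; split.
rewrite mrT; lra.
Qed.

Lemma cdfmr ps : mr PF (Iv (phi ps)) = mr PG (Iv ps).
Proof. by have := cdfeq ps; rewrite /cdfR !Ieq. Qed.

Lemma lower ps : (forall ph qa, ph <= phi ps -> k ph = Some qa -> qa < (s ps).1) ->
  mr PG (Iv ps `&` ~` AG (fun q => q < (s ps).1)) = 0.
Proof.
move=> H; set q := (s ps).1; set AL := AG (fun q0 => q0 < q).
have sub : Iv (phi ps) `<=` [set ph | k ph = None] `|` CF (fun q0 => q0 < q).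
  move=> x xI; case kx: (k x) => [qa|]; [right|by left].
  by rewrite /CF /= kx; exact: H xI kx.
have h1 : mr PF (Iv (phi ps)) <=
    mr PF [set ph | k ph = None] + mr PF (CF (fun q0 => q0 < q)).
  apply: le_trans (mrU2 PF mNone (mCF _)).
  apply: mr_le sub; [exact: mIv|exact: measurableU mNone (mCF _)].
rewrite mrNone add0r -clear cdfmr -/AL in h1.
have ALsub : AL `<=` Iv ps.
  move=> x; rewrite /AL /AG /Iv /= => xq; rewrite leNgt; apply/negP => psx.
  by have := mono_s _ _ psx; rewrite -/q leNgt xq.
have mALc : measurable (Iv ps `&` ~` AL) by apply: measurableI; [exact: mIv|apply: measurableC; exact: mAG].
have d : AL `&` (Iv ps `&` ~` AL) = set0.
  by apply/seteqP; split => x // -[Ax [_ nAx]].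
have e : AL `|` (Iv ps `&` ~` AL) = Iv ps.
  apply/seteqP; split => x.
    by case=> [/ALsub//|[]].
  by move=> Ix; case: (pselect (AL x)) => Ax; [left|right].
have := mrU PG (mAG _) mALc d; rewrite e => h2.
have := mr_ge0 PG mALc; lra.
Qed.

Lemma upper ps : (forall ph qb, phi ps < ph -> k ph = Some qb -> (s ps).1 < qb) ->
  mr PG (Jv ps `&` AG (fun q => q <= (s ps).1)) = 0.
Proof.
move=> H; set q := (s ps).1; set AU := AG (fun q0 => q0 <= q).
set AT := AG (fun q0 => q < q0).
have sub : Jv (phi ps) `<=` [set ph | k ph = None] `|` CF (fun q0 => q < q0).
  move=> x xJ; case kx: (k x) => [qb|]; [right|by left].
  by rewrite /CF /= kx; exact: H xJ kx.
have h1 : mr PF (Jv (phi ps)) <=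
    mr PF [set ph | k ph = None] + mr PF (CF (fun q0 => q < q0)).
  apply: le_trans (mrU2 PF mNone (mCF _)).
  apply: mr_le sub; [exact: mJv|exact: measurableU mNone (mCF _)].
rewrite mrNone add0r -clear -/AT in h1.
have h2 : mr PF (Iv (phi ps)) + mr PF (Jv (phi ps)) = 1.
  have d : Iv (phi ps) `&` Jv (phi ps) = set0.
    apply/seteqP; split => x //; rewrite /Iv /Jv /= => -[h h']; lra.
  have e : Iv (phi ps) `|` Jv (phi ps) = setT.
    apply/seteqP; split => x // _; rewrite /Iv /Jv /=.
    by case: (lerP x (phi ps)) => h; [left|right].
  by rewrite -(mrU PF (mIv _) (mJv _) d) e mrT.
have h3 : mr PG AU + mr PG AT = 1.
  have d : AU `&` AT = set0.
    apply/seteqP; split => x //; rewrite /AU /AT /AG /= => -[h h']; lra.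
  have e : AU `|` AT = setT.
    apply/seteqP; split => x // _; rewrite /AU /AT /AG /=.
    by case: (lerP (s x).1 q) => h; [left|right].
  by rewrite -(mrU PG (mAG _) (mAG _) d) e mrT.
have Isub : Iv ps `<=` AU.
  move=> x; rewrite /Iv /AU /AG /= le_eqVlt => /orP[/eqP ->//|lt].
  exact: mono_s _ _ lt.
have mJA : measurable (Jv ps `&` AU) by apply: measurableI; [exact: mJv|exact: mAG].
have d : Iv ps `&` (Jv ps `&` AU) = set0.
  apply/seteqP; split => x //; rewrite /Iv /Jv /= => -[h [h' _]]; lra.
have e : Iv ps `|` (Jv ps `&` AU) = AU.
  apply/seteqP; split => x.
    by case=> [/Isub//|[]].
  move=> Ax; case: (lerP x ps) => h; [by left|by right].
have := mrU PG (mIv _) mJA d; rewrite e => h4.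
rewrite cdfmr in h2.
have := mr_ge0 PG mJA; lra.
Qed.
Definition BL q := [set ps | (s ps).1 = q /\
  mr PG (Iv ps `&` ~` AG (fun q0 => q0 < q)) = 0].
Definition BU q := [set ps | (s ps).1 = q /\
  mr PG (Jv ps `&` AG (fun q0 => q0 <= q)) = 0].

Lemma neglBL q : PG.-negligible (BL q).
Proof.
have [ne|e] := pselect (BL q !=set0); last first.
  apply: (negligibleS _ (negligible_set0 PG)) => x Bx; apply: e; by exists x.
have [x [Sx cof]] := cofinal_seq ne.
have nb : PG.-negligible (\bigcup_n (Iv (x n) `&` ~` AG (fun q0 => q0 < q))).
  apply: negligible_bigcup => n.
  have mA : measurable (Iv (x n) `&` ~` AG (fun q0 => q0 < q)).
    by apply: measurableI; [exact: mIv|apply: measurableC; exact: mAG].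
  apply/(negligibleP _ mA); apply/(mr0 PG mA); exact: (Sx n).2.
apply: (negligibleS _ nb) => y By; have [n yn] := cof y By.
exists n => //; split => //.
by case: By => e _; rewrite /AG /= e ltxx.
Qed.

Lemma neglBU q : PG.-negligible (BU q).
Proof.
have [ne|e] := pselect (BU q !=set0); last first.
  apply: (negligibleS _ (negligible_set0 PG)) => x Bx; apply: e; by exists x.
have ne' : [set x | BU q (- x)] !=set0.
  by case: ne => y By; exists (- y); rewrite /= opprK.
have [x [Sx cof]] := cofinal_seq ne'.
have nb : PG.-negligible (\bigcup_n ((Jv (- x n) `&` AG (fun q0 => q0 <= q)) `|` [set - x n])).
  apply: negligible_bigcup => n; apply: negligibleU.
    have mA : measurable (Jv (- x n) `&` AG (fun q0 => q0 <= q)).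
      by apply: measurableI; [exact: mJv|exact: mAG].
    apply/(negligibleP _ mA); apply/(mr0 PG mA); exact: (Sx n).2.
  apply/(negligibleP _ (measurable_set1 _)); exact: atG.
apply: (negligibleS _ nb) => y By.
have Sy : [set x | BU q (- x)] (- y) by rewrite /= opprK.
have [n yn] := cof (- y) Sy.
exists n => //.
have [->|ne2] := eqVneq y (- x n); first by right.
left; split.
  by rewrite /Jv /= lt_neqAle eq_sym ne2 /= -lerNl.
by case: By => e _; rewrite /AG /= e.
Qed.

Lemma neglBad : PG.-negligible [set ps | BL (s ps).1 ps \/ BU (s ps).1 ps].
Proof.
apply: (negligibleS _ (@negl_fin _ PG _ Qs (fun q => BL q `|` BU q)
   (fun q => negligibleU (neglBL q) (neglBU q)))).
move=> x Hx; exists (s x).1; split => //.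
by rewrite mem_undup map_f ?sM.
Qed.

Lemma goodopt ps : ~ (BL (s ps).1 ps \/ BU (s ps).1 ps) ->
  forall m, m \in M -> v m.1 ps - m.2 <= v (s ps).1 ps - (s ps).2.
Proof.
move=> nB.
have [ph1 [qa [l1 [ka ha]]]] :
    exists ph qa, ph <= phi ps /\ k ph = Some qa /\ (s ps).1 <= qa.
  apply: contrapT => H; apply: nB; left; split => //; apply: lower => ph qa l ka.
  rewrite ltNge; apply/negP => hq; apply: H; by exists ph, qa.
have [ph2 [qb [l2 [kb hb]]]] :
    exists ph qb, phi ps < ph /\ k ph = Some qb /\ qb <= (s ps).1.
  apply: contrapT => H; apply: nB; right; split => //; apply: upper => ph qb l kb.
  rewrite ltNge; apply/negP => hq; apply: H; by exists ph, qb.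
exact: key l1 ka ha l2 kb hb.
Qed.
Definition optb ps (m : R * R) := all (fun m' => v m'.1 ps - m'.2 <= v m.1 ps - m.2) M.
Fixpoint fo (L : seq (R * R)) ps : R * R :=
  if L is a :: L' then (if optb ps a then a else fo L' ps) else (0, 0).
Definition bb ps := if optb ps (s ps) then s ps else fo M ps.

Lemma in01_0 : in01 (0 : R).
Proof. by rewrite /in01 lexx ler01. Qed.

Lemma u_nd {m} : m \in M -> nondecreasing_fun (fun ps => v m.1 ps - m.2).
Proof.
move=> mM x y xy; have q01 := in01M mM.
have hf : f m.1 (phi x) <= f m.1 (phi y).
  have := phimono _ _ xy; rewrite le_eqVlt => /orP[/eqP ->//|lt].
  have [q0|qp] := eqVneq m.1 0; first by rewrite q0 !f0.
  have qpos : 0 < m.1 by rewrite lt_neqAle eq_sym qp; case/andP: q01.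
  have := scf _ _ _ _ lt in01_0 q01 qpos; rewrite !f0; lra.
have hg : g m.1 y <= g m.1 x.
  move: xy; rewrite le_eqVlt => /orP[/eqP ->//|lt].
  have [q0|qp] := eqVneq m.1 0; first by rewrite q0 !g0.
  have qpos : 0 < m.1 by rewrite lt_neqAle eq_sym qp; case/andP: q01.
  have := scg _ _ _ _ lt in01_0 q01 qpos; rewrite !g0; lra.
rewrite /v; lra.
Qed.

Lemma mle m m' : m \in M -> m' \in M ->
  measurable [set ps | v m'.1 ps - m'.2 <= v m.1 ps - m.2].
Proof.
move=> mM mM'.
have H := measurable_fun_ler (nondecreasing_measurable measurableT (u_nd mM'))
  (nondecreasing_measurable measurableT (u_nd mM)).
have := H measurableT [set true] I; rewrite setTI.
congr measurable; apply/seteqP; split => x //=.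
Qed.

Lemma mopt m : m \in M -> measurable [set ps | optb ps m].
Proof.
move=> mM; rewrite /optb.
suff : forall L, {subset L <= M} ->
    measurable [set ps | all (fun m' => v m'.1 ps - m'.2 <= v m.1 ps - m.2) L].
  by apply.
elim => [|a L IH] sub.
  by have -> : [set ps | all (fun m' => v m'.1 ps - m'.2 <= v m.1 ps - m.2) [::]] = setT
    by apply/seteqP; split.
have -> : [set ps | all (fun m' => v m'.1 ps - m'.2 <= v m.1 ps - m.2) (a :: L)] =
    [set ps | v a.1 ps - a.2 <= v m.1 ps - m.2] `&`
    [set ps | all (fun m' => v m'.1 ps - m'.2 <= v m.1 ps - m.2) L].
  by apply/seteqP; split => x /=; [case/andP|case=> -> ->].
apply: measurableI.
  by apply: mle => //; apply: sub; rewrite in_cons eqxx.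
by apply: IH => q qL; apply: sub; rewrite in_cons qL orbT.
Qed.

Lemma mfo L m : {subset L <= M} -> measurable [set ps | fo L ps = m].
Proof.
elim: L => [|a L IH] sub /=.
  exact: meas_const.
have aM : a \in M by apply: sub; rewrite in_cons eqxx.
have -> : [set ps | (if optb ps a then a else fo L ps) = m] =
   ([set ps | optb ps a] `&` [set _ : R | a = m]) `|`
   (~` [set ps | optb ps a] `&` [set ps | fo L ps = m]).
  apply/seteqP; split => x /=.
    by case: (optb x a) => H; [left|right].
  by case=> -[H1 H2]; [rewrite H1|move/negP/negbTE: H1 => ->].
apply: measurableU; apply: measurableI.
- exact: mopt.
- exact: meas_const.
- apply: measurableC; exact: mopt.
- by apply: IH => q qL; apply: sub; rewrite in_cons qL orbT.
Qed.

Lemma fo_opt L ps : (exists2 m, m \in L & optb ps m) ->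
  fo L ps \in L /\ optb ps (fo L ps).
Proof.
elim: L => [[m]//|a L IH] [m mL om] /=.
case oa: (optb ps a); first by rewrite mem_head.
move: mL; rewrite in_cons => /orP[/eqP ema|mL].
  by move: oa; rewrite -ema om.
have [H1 H2] := IH (ex_intro2 _ _ m mL om).
by rewrite in_cons H1 orbT.
Qed.

Lemma exopt ps : exists2 m, m \in M & optb ps m.
Proof.
have M0 : M != [::] by case: HM => H _; apply/eqP => e; rewrite e in H.
have [m mM Hm] := argmax (fun m => v m.1 ps - m.2) M0.
by exists m => //; apply/allP => m' m'M; exact: Hm.
Qed.

Lemma bb_choice : buyer_choice v M bb.
Proof.
move=> th; rewrite /bb; case o: (optb th (s th)).
  by split => // m mM; move/allP: o => /(_ m mM).
have [H1 H2] := fo_opt M th (exopt th).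
by split => // m mM; move/allP: H2 => /(_ m mM).
Qed.

Lemma mbb m : measurable [set ps | bb ps = m].
Proof.
have mO : measurable [set ps | optb ps (s ps)].
  have -> : [set ps | optb ps (s ps)] = [set x | s x \in M /\ [set y | optb y (s x)] x].
    by apply/seteqP; split => x /=; [move=> ?; split|case].
  apply: (@meas_fin _ _ s M (fun m => [set y | optb y m])).
    by move=> q _; exact: ms.
  by move=> q qM; exact: mopt.
have -> : [set ps | bb ps = m] =
   ([set ps | optb ps (s ps)] `&` [set ps | s ps = m]) `|`
   (~` [set ps | optb ps (s ps)] `&` [set ps | fo M ps = m]).
  apply/seteqP; split => x /=; rewrite /bb.
    by case: (optb x (s x)) => H; [left|right].
  by case=> -[H1 H2]; [rewrite H1|move/negP/negbTE: H1 => ->].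
apply: measurableU.
  by apply: measurableI; [exact: mO|exact: ms].
apply: measurableI; first by apply: measurableC.
by apply: mfo.
Qed.

Lemma bb_eq ps : ~ (BL (s ps).1 ps \/ BU (s ps).1 ps) -> bb ps = s ps.
Proof.
move=> nB; rewrite /bb.
have -> : optb ps (s ps) by apply/allP => m mM; exact: goodopt.
by [].
Qed.

Lemma bbM ps : bb ps \in M.
Proof. by have [] := bb_choice ps. Qed.

Lemma part4 c : exists b : R -> R * R,
  [/\ buyer_choice (fun q ps => f q (phi ps) - g q ps) M b,
      (forall m, measurable [set ps | b ps = m]),
      {ae PG, forall ps, b ps = s ps} &
      certifier_revenue PG c s = seller_revenue PG c b].
Proof.
exists bb; split.
- exact: bb_choice.
- exact: mbb.
- apply: (negligibleS _ neglBad) => x /= H; apply: contrapT => nB.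
  by apply: H; exact: bb_eq.
have [N [mN N0 sN]] := neglBad.
rewrite /certifier_revenue /seller_revenue.
have -> : (\int[PG]_ps ((s ps).2)%:E = \int[PG]_th ((bb th).2)%:E)%E.
  apply: (ae_eq_integral (fun th => ((bb th).2)%:E)) => //.
  - exact: (@meas_fin_fun _ _ s M (fun m => (m.2)%:E) ms sM).
  - exact: (@meas_fin_fun _ _ bb M (fun m => (m.2)%:E) mbb bbM).
  apply: (negligibleS _ neglBad) => x /= H; apply: contrapT => nB.
  by apply: H => _; rewrite bb_eq.
have mA : measurable [set ps | 0 < (s ps).1].
  have -> : [set ps | 0 < (s ps).1] = [set x | s x \in M /\ [set _ : R | 0 < (s x).1] x].
    by apply/seteqP; split => x /=; [move=> ?; split|case].
  exact: (@meas_fin _ _ s M (fun m => [set _ : R | 0 < m.1]) (fun m _ => ms m)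
    (fun m _ => meas_const _ _)).
have mB : measurable [set th | (bb th).1 != 0].
  have -> : [set th | (bb th).1 != 0] =
      [set x | bb x \in M /\ [set _ : R | (bb x).1 != 0] x].
    by apply/seteqP; split => x /=; [move=> ?; split => //; exact: bbM|case].
  exact: (@meas_fin _ _ bb M (fun m => [set _ : R | m.1 != 0]) (fun m _ => mbb m)
    (fun m _ => meas_const _ _)).
rewrite (@null_diff _ PG _ _ mA mN N0) (@null_diff _ PG _ _ mB mN N0).
have -> : [set ps | 0 < (s ps).1] `\` N = [set th | (bb th).1 != 0] `\` N.
  apply/seteqP; split => x /= [H nN]; split => //.
    have e : bb x = s x by apply: bb_eq => B; apply: nN; exact: sN.
    by rewrite e; move: H; rewrite lt0r => /andP[].
  have e : bb x = s x by apply: bb_eq => B; apply: nN; exact: sN.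
  move: H; rewrite e lt0r => ->; by case/andP: (in01M (sM x)).
by [].
Qed.
End Main.
Theorem proposition1 (R : realType) (PG PF : probability R R)
    (f g : R -> R -> R) (c : R) (phi : R -> R) :
  atomless PG -> compact_support PG ->
  atomless PF -> compact_support PF ->
  (forall ps, convex01 (fun q => g q ps)) ->
  (forall ps, nondecreasing01 (fun q => g q ps)) ->
  (forall ps, g 0 ps = 0) ->
  (forall ph, concave01 (fun q => f q ph)) ->
  (forall ph, nondecreasing01 (fun q => f q ph)) ->
  (forall ph, f 0 ph = 0) ->
  (forall ph q, in01 q -> 0 <= f q ph <= 1) ->
  strict_single_crossing f ->
  strict_cost_single_crossing g ->
  0 <= c ->
  (* phi(psi) is the consumer type with F(phi(psi)) = G(psi), taken nondecreasing *)
  {homo phi : x y / x <= y} ->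
  (forall ps, cdfR PF (phi ps) = cdfR PG ps) ->
  let v := fun q ps => f q (phi ps) - g q ps in
  [/\ (forall ps, concave01 (fun q => v q ps)),
      (forall ps, v 0 ps = 0),
      strict_single_crossing v &
      forall (M : seq (R * R)) (s : R -> R * R) (k : R -> option R)
             (p : R -> R),
        menu M -> cert_equilibrium PG PF f g M s k p ->
        exists b : R -> R * R,
          [/\ buyer_choice v M b,
              (forall m, measurable [set ps | b ps = m]),
              {ae PG, forall ps, b ps = s ps} &
              certifier_revenue PG c s = seller_revenue PG c b]].
Proof.
move=> atG csG atF csF gconv gnd g0 fconc fnd f0 fb scf scg c0 phimono cdfeq v.
split.
- move=> ps x y l hx hy hl; rewrite /v.
  have := gconv ps x y l hx hy hl; have := fconc (phi ps) x y l hx hy hl.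
  rewrite /=; lra.
- by move=> ps; rewrite /v f0 g0 subr0.
- move=> th1 th2 q1 q2 lt h1 h2 lq; rewrite /v.
  have := scg _ _ _ _ lt h1 h2 lq.
  have := phimono _ _ (ltW lt); rewrite le_eqVlt => /orP[/eqP ->|lp].
    lra.
  have := scf _ _ _ _ lp h1 h2 lq; lra.
- move=> M s k p HM HE.
  exact: (@part4 R PG PF f g phi atG f0 g0 scf scg phimono cdfeq M s k p HM HE c).
Qed.
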